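(* The four axioms in the definition of an Elgot monad (Fixpoint, Naturality, Codiagonal, Uniformity) are mutually independent. More precisely, for each of these four axioms there exists a monad $\mathbb{T}$ on $\mathbf{Set}$ together with an operator $(\cdot)^\dagger:\mathbf{Set}(X,T(Y+X))\to\mathbf{Set}(X,TY)$ (for all sets $X,Y$) that satisfies the other three axioms but fails that one.
   Context: Let $\mathbf{C}$ be a category with binary coproducts (injections $\mathrm{inl},\mathrm{inr}$, copairing $[f,g]$). A monad is a Kleisli triple $(T,\eta,(\cdot)^\sharp)$; Kleisli composition is $g\cdot f=g^\sharp\circ f$. A monad $\mathbb{T}$ equipped with an operator $(\cdot)^\dagger:\mathbf{C}(X,T(Y+X))\to\mathbf{C}(X,TY)$ is an Elgot monad if: Fixpoint: $[\eta,f^\dagger]\cdot f=f^\dagger$ for $f:X\to T(Y+X)$; Naturality: $g\cdot f^\dagger=([\eta\circ\mathrm{inl}\cdot g,\ \eta\circ\mathrm{inr}]\cdot f)^\dagger$ for $g:Y\to TZ$, $f:X\to T(Y+X)$ (here $\eta\circ\mathrm{inl}\cdot g=T\mathrm{inl}\circ g$); Codiagonal: $f^{\dagger\dagger}=([\eta,\eta\circ\mathrm{inr}]\cdot f)^\dagger$ for $f:X\to T((Y+X)+X)$; Uniformity: for $h:X\to Z$ in $\mathbf{C}$, $g:Z\to T(Y+Z)$, $f:X\to T(Y+X)$, if $g\circ h=T(\mathrm{id}+h)\circ f$ then $g^\dagger\circ h=f^\dagger$. *)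

(* Defs.v *)
(* The category Set is modelled by Rocq
   types and functions; equality of morphisms is extensional (pointwise). *)

Record Monad : Type := {
  T : Type -> Type;
  ret : forall X : Type, X -> T X;
  bind : forall X Y : Type, (X -> T Y) -> T X -> T Y;
  bind_ext : forall X Y (f g : X -> T Y),
      (forall x, f x = g x) -> forall t, bind X Y f t = bind X Y g t;
  bind_ret : forall X (t : T X), bind X X (ret X) t = t;
  ret_bind : forall X Y (f : X -> T Y) (x : X), bind X Y f (ret X x) = f x;
  bind_bind : forall X Y Z (f : X -> T Y) (g : Y -> T Z) (t : T X),
      bind Y Z g (bind X Y f t) = bind X Z (fun x => bind Y Z g (f x)) t
}.

Arguments ret {m X} _.
Arguments bind {m X Y} _ _.

Definition copair {A B C : Type} (f : A -> C) (g : B -> C) (s : A + B) : C :=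
  match s with inl a => f a | inr b => g b end.

Definition summap {Y X Z : Type} (h : X -> Z) (s : Y + X) : Y + Z :=
  match s with inl y => inl y | inr x => inr (h x) end.

Definition Dagger (M : Monad) : Type :=
  forall X Y : Type, (X -> T M (Y + X)) -> X -> T M Y.

Definition dagger_ext (M : Monad) (d : Dagger M) : Prop :=
  forall X Y (f g : X -> T M (Y + X)),
    (forall x, f x = g x) -> forall x, d X Y f x = d X Y g x.

Definition Fixpoint_ax (M : Monad) (d : Dagger M) : Prop :=
  forall X Y (f : X -> T M (Y + X)) (x : X),
    bind (copair (@ret M Y) (d X Y f)) (f x) = d X Y f x.

Definition Naturality_ax (M : Monad) (d : Dagger M) : Prop :=
  forall X Y Z (g : Y -> T M Z) (f : X -> T M (Y + X)) (x : X),
    bind g (d X Y f x) =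
    d X Z (fun x' => bind (copair (fun y => bind (fun z => @ret M (Z + X) (inl z)) (g y))
                                  (fun x'' => @ret M (Z + X) (inr x'')))
                          (f x')) x.

Definition Codiagonal_ax (M : Monad) (d : Dagger M) : Prop :=
  forall X Y (f : X -> T M ((Y + X) + X)) (x : X),
    d X Y (d X (Y + X)%type f) x =
    d X Y (fun x' => bind (copair (@ret M (Y + X)) (fun x'' => @ret M (Y + X) (inr x'')))
                          (f x')) x.

Definition Uniformity_ax (M : Monad) (d : Dagger M) : Prop :=
  forall X Y Z (h : X -> Z) (g : Z -> T M (Y + Z)) (f : X -> T M (Y + X)),
    (forall x, g (h x) = bind (fun s => @ret M (Y + Z) (summap h s)) (f x)) ->
    forall x, d Z Y g (h x) = d X Y f x.

(* Main.v *)
Require Import Defs.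
From Stdlib Require Import FunctionalExtensionality PropExtensionality ProofIrrelevance Classical.

Definition RT (X : Type) : Type := ((X -> Prop) * Prop)%type.
Definition rret {X} (x : X) : RT X := (fun y => y = x, False).
Definition rbind {X Y} (f : X -> RT Y) (t : RT X) : RT Y :=
  (fun y => exists x, fst t x /\ fst (f x) y, snd t \/ exists x, fst t x /\ snd (f x)).

Lemma pair_ext {X} (p q : RT X) :
  (forall y, fst p y <-> fst q y) -> (snd p <-> snd q) -> p = q.
Proof.
  destruct p as [p1 p2], q as [q1 q2]; simpl; intros H1 H2. f_equal.
  - apply functional_extensionality; intro y; apply propositional_extensionality; auto.
  - apply propositional_extensionality; auto.
Qed.

Lemma rbind_ret X (t : RT X) : rbind rret t = t.
Proof.
  apply pair_ext; simpl.
  - intro y; split; [intros [x [H1 H2]]; subst; auto | intro H; exists y; auto].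
  - split; [intros [H|[x [_ []]]]; auto | auto].
Qed.

Lemma ret_rbind X Y (f : X -> RT Y) x : rbind f (rret x) = f x.
Proof.
  apply pair_ext; simpl.
  - intro y; split; [intros [x' [H1 H2]]; subst; auto | intro H; exists x; auto].
  - split; [intros [[]|[x' [H1 H2]]]; subst; auto | intro H; right; exists x; auto].
Qed.

Lemma rbind_rbind X Y Z (f : X -> RT Y) (g : Y -> RT Z) t :
  rbind g (rbind f t) = rbind (fun x => rbind g (f x)) t.
Proof.
  apply pair_ext; simpl.
  - intro z; split.
    + intros [y [[x [H1 H2]] H3]]; exists x; split; auto; exists y; auto.
    + intros [x [H1 [y [H2 H3]]]]; exists y; split; auto; exists x; auto.
  - split.
    + intros [[H|[x [H1 H2]]]|[y [[x [H1 H2]] H3]]]; auto.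
      * right; exists x; split; auto.
      * right; exists x; split; auto; right; exists y; auto.
    + intros [H|[x [H1 [H2|[y [H3 H4]]]]]]; auto.
      * left; right; exists x; auto.
      * right; exists y; split; auto; exists x; auto.
Qed.

Lemma rbind_ext X Y (f g : X -> RT Y) : (forall x, f x = g x) -> forall t, rbind f t = rbind g t.
Proof.
  intros H t; assert (f = g) by (apply functional_extensionality; auto); subst; auto.
Qed.

Definition Pd : Monad := {|
  T := RT; ret := fun X => @rret X; bind := fun X Y => @rbind X Y;
  bind_ext := rbind_ext; bind_ret := rbind_ret; ret_bind := ret_rbind;
  bind_bind := rbind_rbind |}.

Inductive Rch {X} (ed : X -> X -> Prop) : X -> X -> Prop :=
| rch0 x : Rch ed x x
| rchS x x' z : ed x x' -> Rch ed x' z -> Rch ed x z.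
Arguments rch0 {X ed} x.
Arguments rchS {X ed} x x' z _ _.

Definition Rg {X Y} (ed : X -> X -> Prop) (ex : X -> Y -> Prop) x y :=
  exists w, Rch ed x w /\ ex w y.
Definition FRg {X} (ed : X -> X -> Prop) (fl : X -> Prop) x :=
  exists w, Rch ed x w /\ fl w.
Definition Inf {X} (ed : X -> X -> Prop) x :=
  exists P : X -> Prop, P x /\ forall w, P w -> exists w', ed w w' /\ P w'.
Definition Cof {X Y} (ed : X -> X -> Prop) (ex : X -> Y -> Prop) x :=
  exists w, Rch ed x w /\ exists P : X -> Prop, P w /\
    forall v, P v -> (forall y, ~ ex v y) /\ exists v', ed v v' /\ P v'.

Lemma Rch_trans {X} (ed : X -> X -> Prop) x y z : Rch ed x y -> Rch ed y z -> Rch ed x z.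
Proof. induction 1; intros; auto. eapply rchS; eauto. Qed.

Lemma Rch_snoc {X} (ed : X -> X -> Prop) x y z : Rch ed x y -> ed y z -> Rch ed x z.
Proof. intros H1 H2; eapply Rch_trans; eauto. eapply rchS; eauto. apply rch0. Qed.

Lemma Rch1 {X} (ed : X -> X -> Prop) x y : ed x y -> Rch ed x y.
Proof. intros; eapply rchS; eauto; apply rch0. Qed.

Lemma Rch_mono {X} (ed ed' : X -> X -> Prop) x y :
  (forall a b, ed a b -> ed' a b) -> Rch ed x y -> Rch ed' x y.
Proof. intros H; induction 1; [apply rch0 | eapply rchS; eauto]. Qed.

Lemma Rch_inv {X} (ed : X -> X -> Prop) x y :
  Rch ed x y -> x = y \/ exists x', ed x x' /\ Rch ed x' y.
Proof. destruct 1; eauto. Qed.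

Lemma Rg_unfold {X Y} ed (ex : X -> Y -> Prop) x y :
  Rg ed ex x y <-> ex x y \/ exists x', ed x x' /\ Rg ed ex x' y.
Proof.
  unfold Rg; split.
  - intros [w [H1 H2]]; destruct (Rch_inv _ _ _ H1) as [->|[x' [H3 H4]]];
      [left; auto | right; exists x'; split; auto; exists w; auto].
  - intros [H|[x' [H1 [w [H2 H3]]]]]; [exists x; split; auto; apply rch0|].
    exists w; split; auto; eapply rchS; eauto.
Qed.

Lemma FRg_unfold {X} ed (fl : X -> Prop) x :
  FRg ed fl x <-> fl x \/ exists x', ed x x' /\ FRg ed fl x'.
Proof.
  unfold FRg; split.
  - intros [w [H1 H2]]; destruct (Rch_inv _ _ _ H1) as [->|[x' [H3 H4]]];
      [left; auto | right; exists x'; split; auto; exists w; auto].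
  - intros [H|[x' [H1 [w [H2 H3]]]]]; [exists x; split; auto; apply rch0|].
    exists w; split; auto; eapply rchS; eauto.
Qed.

Lemma Inf_unfold {X} (ed : X -> X -> Prop) x :
  Inf ed x <-> exists x', ed x x' /\ Inf ed x'.
Proof.
  unfold Inf; split.
  - intros [P [H1 H2]]. destruct (H2 x H1) as [w' [H3 H4]]. exists w'; split; auto.
    exists P; auto.
  - intros [x' [H1 [P [H2 H3]]]]. exists (fun w => w = x \/ P w); split; auto.
    intros w [->|Hw]; [exists x'; auto|]. destruct (H3 w Hw) as [w' [? ?]]; eauto.
Qed.

Lemma Inf_rch {X} (ed : X -> X -> Prop) x w : Rch ed x w -> Inf ed w -> Inf ed x.
Proof. induction 1; auto. intros H2; apply Inf_unfold; eauto. Qed.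

Lemma Inf_mono {X} (ed ed' : X -> X -> Prop) x :
  (forall a b, ed a b -> ed' a b) -> Inf ed x -> Inf ed' x.
Proof.
  intros H [P [H1 H2]]; exists P; split; auto.
  intros w Hw; destruct (H2 w Hw) as [w' [? ?]]; eauto.
Qed.

Lemma Inf_plus {X} (ed : X -> X -> Prop) (P : X -> Prop) x : P x ->
  (forall w, P w -> exists w', (exists u, Rch ed w u /\ ed u w') /\ P w') -> Inf ed x.
Proof.
  intros Hx HP.
  exists (fun v => exists w', P w' /\ exists u, Rch ed v u /\ ed u w'); split.
  - destruct (HP x Hx) as [w' [? ?]]; eauto.
  - intros v [w' [Hw' [u [Hvu Hu]]]].
    destruct (Rch_inv _ _ _ Hvu) as [<-|[v1 [H1 H2]]].
    + exists w'; split; auto. destruct (HP w' Hw') as [w'' [? ?]]; eauto.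
    + exists v1; split; eauto.
Qed.

Lemma Cof_unfold {X Y} ed (ex : X -> Y -> Prop) x :
  Cof ed ex x <-> exists x', ed x x' /\ Cof ed ex x'.
Proof.
  unfold Cof; split.
  - intros [w [H1 [P [H2 H3]]]].
    destruct (Rch_inv _ _ _ H1) as [<-|[x' [H4 H5]]].
    + destruct (H3 x H2) as [_ [v' [H4 H5]]]. exists v'; split; auto.
      exists v'; split; [apply rch0|]; exists P; auto.
    + exists x'; split; auto; exists w; split; auto; exists P; auto.
  - intros [x' [H1 [w [H2 H3]]]]; exists w; split; auto; eapply rchS; eauto.
Qed.

Definition edf {X Y} (f : X -> RT (Y + X)) x x' := fst (f x) (inr x').
Definition exf {X Y} (f : X -> RT (Y + X)) x y := fst (f x) (inl y).
Definition flf {X Y} (f : X -> RT (Y + X)) x := snd (f x).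

Definition dgen (a : Prop) (c : Type -> Prop) : Dagger Pd :=
  fun X Y f x => (fun y => Rg (edf f) (exf f) x y \/ (a /\ Inf (edf f) x),
                  FRg (edf f) (flf f) x \/ (c X /\ Inf (edf f) x)).

Lemma fix_dgen a c : Fixpoint_ax Pd (dgen a c).
Proof.
  intros X Y f x. apply pair_ext; simpl.
  - intro y. rewrite (Rg_unfold (edf f) (exf f) x y), (Inf_unfold (edf f) x).
    unfold exf, edf. split.
    + intros [[y'|x'] [H1 H2]]; try simpl in H2.
      * subst; auto.
      * destruct H2 as [H2|[Ha H2]]; eauto 6.
    + intros [[H|[x' [H1 H2]]]|[Ha [x' [H1 H2]]]].
      * exists (inl y); simpl; auto.
      * exists (inr x'); simpl; auto.
      * exists (inr x'); simpl; auto.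
  - rewrite (FRg_unfold (edf f) (flf f) x), (Inf_unfold (edf f) x).
    unfold flf, edf. split.
    + intros [H|[[y'|x'] [H1 H2]]]; try simpl in H2; [auto|contradiction|].
      destruct H2 as [H2|[Hc H2]]; eauto 6.
    + intros [[H|[x' [H1 H2]]]|[Hc [x' [H1 H2]]]]; auto.
      * right; exists (inr x'); simpl; auto.
      * right; exists (inr x'); simpl; auto.
Qed.

Lemma fun_eq2 {A B} (r s : A -> B -> Prop) : (forall a b, r a b <-> s a b) -> r = s.
Proof.
  intros H; apply functional_extensionality; intro a; apply functional_extensionality;
  intro b; apply propositional_extensionality; auto.
Qed.

Lemma nat_dgen c : Naturality_ax Pd (dgen False c).
Proof.
  intros X Y Z g f x.
  set (f' := fun x' => rbind (copair (fun y => rbind (fun z => rret (inl z)) (g y))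
                              (fun x'' => rret (inr x''))) (f x')).
  change (rbind g (dgen False c X Y f x) = dgen False c X Z f' x).
  assert (Hed : edf f' = edf f).
  { apply fun_eq2; intros u v; unfold edf, f'; simpl; split.
    - intros [[y|x''] [H1 H2]]; try simpl in H2.
      + destruct H2 as [z [_ H2]]; discriminate.
      + injection H2; intros; subst; auto.
    - intros H; exists (inr v); simpl; auto. }
  assert (Hex : forall u z, exf f' u z <-> exists y, exf f u y /\ fst (g y) z).
  { intros u z; unfold exf, f'; simpl; split.
    - intros [[y|x''] [H1 H2]]; try simpl in H2.
      + destruct H2 as [z' [H2 H3]]; injection H3; intros; subst; eauto.
      + discriminate.
    - intros [y [H1 H2]]; exists (inl y); simpl; split; auto; exists z; auto. }
  assert (Hfl : forall u, flf f' u <-> flf f u \/ exists y, exf f u y /\ snd (g y)).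
  { intros u; unfold flf, exf, f'; simpl; split.
    - intros [H|[[y|x''] [H1 H2]]]; try simpl in H2; auto.
      + destruct H2 as [H2|[z [_ []]]]; eauto.
      + contradiction.
    - intros [H|[y [H1 H2]]]; auto. right; exists (inl y); simpl; auto. }
  unfold dgen; rewrite Hed. apply pair_ext; simpl.
  - intro z; split.
    + intros [y [[[w [H1 H2]]|[[] _]] H3]]. left; exists w; split; auto; apply Hex; eauto.
    + intros [[w [H1 H2]]|[[] _]]. apply Hex in H2; destruct H2 as [y [H2 H3]].
      exists y; split; auto; left; exists w; auto.
  - split.
    + intros [[[w [H1 H2]]|H]|[y [[[w [H1 H2]]|[[] _]] H3]]]; auto.
      * left; exists w; split; auto; apply Hfl; auto.
      * left; exists w; split; auto; apply Hfl; eauto.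
    + intros [[w [H1 H2]]|H]; auto. apply Hfl in H2; destruct H2 as [H2|[y [H2 H3]]].
      * left; left; exists w; auto.
      * right; exists y; split; auto; left; exists w; auto.
Qed.

Section U.
Context {X Z Y : Type} (h : X -> Z) (edF : X -> X -> Prop) (edG : Z -> Z -> Prop)
  (Hed : forall x z, edG (h x) z <-> exists x', edF x x' /\ z = h x').

Lemma rch_down x w : Rch edG (h x) w -> exists x', Rch edF x x' /\ w = h x'.
Proof.
  intros H; remember (h x) as z eqn:Ez; revert x Ez; induction H; intros x0 Ez; subst.
  - exists x0; split; auto; apply rch0.
  - apply Hed in H; destruct H as [x1 [H1 ->]].
    destruct (IHRch x1 eq_refl) as [x2 [H3 ->]]. exists x2; split; auto; eapply rchS; eauto.
Qed.

Lemma rch_up x x' : Rch edF x x' -> Rch edG (h x) (h x').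
Proof.
  induction 1; [apply rch0|]. eapply rchS; eauto. apply Hed; eauto.
Qed.

Lemma Rg_h (exF : X -> Y -> Prop) exG (Hex : forall x y, exG (h x) y <-> exF x y) x y :
  Rg edG exG (h x) y <-> Rg edF exF x y.
Proof.
  split.
  - intros [w [H1 H2]]; destruct (rch_down _ _ H1) as [x' [H3 ->]].
    exists x'; split; auto; apply Hex; auto.
  - intros [w [H1 H2]]; exists (h w); split; [apply rch_up; auto | apply Hex; auto].
Qed.

Lemma FRg_h (flF : X -> Prop) flG (Hfl : forall x, flG (h x) <-> flF x) x :
  FRg edG flG (h x) <-> FRg edF flF x.
Proof.
  split.
  - intros [w [H1 H2]]; destruct (rch_down _ _ H1) as [x' [H3 ->]].
    exists x'; split; auto; apply Hfl; auto.
  - intros [w [H1 H2]]; exists (h w); split; [apply rch_up; auto | apply Hfl; auto].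
Qed.

Lemma Inf_h x : Inf edG (h x) <-> Inf edF x.
Proof.
  split.
  - intros [P [H1 H2]]. exists (fun v => P (h v)); split; auto.
    intros w Hw; destruct (H2 _ Hw) as [z [H3 H4]]. apply Hed in H3.
    destruct H3 as [x' [H3 ->]]; eauto.
  - intros [P [H1 H2]]. exists (fun z => exists v, z = h v /\ P v); split; eauto.
    intros z [v [-> Hv]]. destruct (H2 _ Hv) as [v' [H3 H4]].
    exists (h v'); split; eauto. apply Hed; eauto.
Qed.

Lemma Cof_h (exF : X -> Y -> Prop) exG (Hex : forall x y, exG (h x) y <-> exF x y) x :
  Cof edG exG (h x) <-> Cof edF exF x.
Proof.
  split.
  - intros [w [H1 [P [H2 H3]]]]. destruct (rch_down _ _ H1) as [x' [H4 ->]].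
    exists x'; split; auto. exists (fun v => P (h v)); split; auto.
    intros v Hv; destruct (H3 _ Hv) as [H5 [z [H6 H7]]]. split.
    + intros y Hy; apply (H5 y), Hex; auto.
    + apply Hed in H6; destruct H6 as [v' [H6 ->]]; eauto.
  - intros [w [H1 [P [H2 H3]]]]. exists (h w); split; [apply rch_up; auto|].
    exists (fun z => exists v, z = h v /\ P v); split; eauto.
    intros z [v [-> Hv]]. destruct (H3 _ Hv) as [H5 [v' [H6 H7]]]. split.
    + intros y Hy; apply (H5 y), Hex; auto.
    + exists (h v'); split; eauto. apply Hed; eauto.
Qed.
End U.

Lemma uni_edges {X Y Z} (h : X -> Z) (g : Z -> RT (Y + Z)) (f : X -> RT (Y + X)) :
  (forall x, g (h x) = rbind (fun s => rret (summap h s)) (f x)) ->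
  (forall x z, edf g (h x) z <-> exists x', edf f x x' /\ z = h x') /\
  (forall x y, exf g (h x) y <-> exf f x y) /\
  (forall x, flf g (h x) <-> flf f x).
Proof.
  intros H; unfold edf, exf, flf; split; [|split]; intros; rewrite H; simpl; split.
  - intros [[y|x'] [H1 H2]]; simpl in H2; [discriminate|]. injection H2; intros; subst; eauto.
  - intros [x' [H1 ->]]; exists (inr x'); simpl; auto.
  - intros [[y'|x'] [H1 H2]]; simpl in H2; [|discriminate]. injection H2; intros; subst; eauto.
  - intros H1; exists (inl y); simpl; auto.
  - intros [H1|[s [_ []]]]; auto.
  - auto.
Qed.

Lemma uni_dgen a c0 : Uniformity_ax Pd (dgen a (fun _ => c0)).
Proof.
  intros X Y Z h g f H x. simpl in H.
  destruct (uni_edges h g f H) as [Hed [Hex Hfl]].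
  apply pair_ext; simpl.
  - intro y. rewrite (Rg_h h _ _ Hed _ _ Hex), (Inf_h h _ _ Hed). tauto.
  - rewrite (FRg_h h _ _ Hed _ _ Hfl), (Inf_h h _ _ Hed). tauto.
Qed.

Section CD.
Context {X Y : Type} (a cc : Prop) (Hac : a -> cc)
  (edi : X -> X -> Prop) (exi : X -> (Y + X) -> Prop) (fli : X -> Prop).

Definition ed1 x w := Rg edi exi x (inr w) \/ (a /\ Inf edi x).
Definition ex1 x y := Rg edi exi x (inl y) \/ (a /\ Inf edi x).
Definition fl1 x := FRg edi fli x \/ (cc /\ Inf edi x).
Definition ed2 x w := exi x (inr w) \/ edi x w.
Definition ex2 x (y : Y) := exi x (inl y).

Lemma edi_ed2 x w : edi x w -> ed2 x w.
Proof. unfold ed2; auto. Qed.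

Lemma Ri_R2 x w : Rch edi x w -> Rch ed2 x w.
Proof. apply Rch_mono, edi_ed2. Qed.

Lemma Inf_i2 x : Inf edi x -> Inf ed2 x.
Proof. apply Inf_mono, edi_ed2. Qed.

Lemma ed1_plus x w : Rg edi exi x (inr w) -> exists u, Rch ed2 x u /\ ed2 u w.
Proof. intros [u [H1 H2]]; exists u; split; [apply Ri_R2; auto | left; auto]. Qed.

Lemma R1_R2 x w : Rch ed1 x w -> Rch ed2 x w \/ (a /\ Inf ed2 x).
Proof.
  induction 1; [left; apply rch0|].
  destruct H as [H|[Ha H]].
  - destruct (ed1_plus _ _ H) as [u [H2 H3]]. assert (Rch ed2 x x') by (eapply Rch_snoc; eauto).
    destruct IHRch as [H4|[Ha H4]]; [left; eapply Rch_trans; eauto|].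
    right; split; auto; eapply Inf_rch; eauto.
  - right; split; auto; apply Inf_i2; auto.
Qed.

Lemma Inf12 x : Inf ed1 x -> Inf ed2 x.
Proof.
  intros [P [H1 H2]].
  apply (Inf_plus ed2 (fun v => P v \/ Inf ed2 v)); auto.
  intros w [Hw|Hw].
  - destruct (H2 w Hw) as [w' [[H|[Ha H]] H']].
    + exists w'; split; auto; apply ed1_plus; auto.
    + apply Inf_i2 in H. apply Inf_unfold in H. destruct H as [w'' [? ?]].
      exists w''; split; auto. exists w; split; auto; apply rch0.
  - apply Inf_unfold in Hw. destruct Hw as [w'' [? ?]].
    exists w''; split; auto. exists w; split; auto; apply rch0.
Qed.

Lemma tr_ed1 x x' v : edi x x' -> ed1 x' v -> ed1 x v.
Proof.
  intros H [H1|[Ha H1]]; [left|right].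
  - apply Rg_unfold; eauto.
  - split; auto; apply Inf_unfold; eauto.
Qed.
Lemma tr_ex1 x x' y : edi x x' -> ex1 x' y -> ex1 x y.
Proof.
  intros H [H1|[Ha H1]]; [left|right].
  - apply Rg_unfold; eauto.
  - split; auto; apply Inf_unfold; eauto.
Qed.
Lemma tr_fl1 x x' : edi x x' -> fl1 x' -> fl1 x.
Proof.
  intros H [H1|[Ha H1]]; [left|right].
  - apply FRg_unfold; eauto.
  - split; auto; apply Inf_unfold; eauto.
Qed.

Lemma tr_Rg1 x x' y : edi x x' -> Rg ed1 ex1 x' y -> Rg ed1 ex1 x y.
Proof.
  intros H [u [H1 H2]]. destruct (Rch_inv _ _ _ H1) as [<-|[v [H3 H4]]].
  - exists x; split; [apply rch0|]; eapply tr_ex1; eauto.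
  - exists u; split; auto; eapply rchS; eauto; eapply tr_ed1; eauto.
Qed.
Lemma tr_FRg1 x x' : edi x x' -> FRg ed1 fl1 x' -> FRg ed1 fl1 x.
Proof.
  intros H [u [H1 H2]]. destruct (Rch_inv _ _ _ H1) as [<-|[v [H3 H4]]].
  - exists x; split; [apply rch0|]; eapply tr_fl1; eauto.
  - exists u; split; auto; eapply rchS; eauto; eapply tr_ed1; eauto.
Qed.

Lemma Inf21 x : Inf ed2 x -> Inf ed1 x \/ exists w, Rch ed1 x w /\ Inf edi w.
Proof.
  intros [P [H1 H2]].
  destruct (classic (exists w, Rch ed1 x w /\ Inf edi w)) as [H|H]; [auto|left].
  exists (fun v => Rch ed1 x v /\ P v); split; [split; auto; apply rch0|].
  intros v [Hv1 Hv2].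
  destruct (classic (exists v', ed1 v v' /\ P v')) as [[v' [H3 H4]]|H3].
  - exists v'; split; auto; split; auto; eapply Rch_snoc; eauto.
  - exfalso; apply H; exists v; split; auto.
    exists (fun u => Rch edi v u /\ P u); split; [split; auto; apply rch0|].
    intros u [Hu1 Hu2]. destruct (H2 u Hu2) as [u' [[H4|H4] H5]].
    + exfalso; apply H3; exists u'; split; auto. left; exists u; auto.
    + exists u'; split; auto; split; auto; eapply Rch_snoc; eauto.
Qed.

Lemma codA x y : Rg ed1 ex1 x y \/ (a /\ Inf ed1 x) <-> Rg ed2 ex2 x y \/ (a /\ Inf ed2 x).
Proof.
  split.
  - intros [[w [H1 H2]]|[Ha H1]]; [|right; split; auto; apply Inf12; auto].
    destruct (R1_R2 _ _ H1) as [H3|H3]; [|auto].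
    destruct H2 as [[u [H4 H5]]|[Ha H4]].
    + left; exists u; split; auto; eapply Rch_trans; eauto; apply Ri_R2; auto.
    + right; split; auto; eapply Inf_rch; eauto; apply Inf_i2; auto.
  - intros [[w [H1 H2]]|[Ha H1]].
    + left. clear -H1 H2. induction H1.
      * exists x; split; [apply rch0|]. left; exists x; split; auto; apply rch0.
      * specialize (IHRch H2). destruct H as [H|H].
        -- destruct IHRch as [u [H3 H4]]. exists u; split; auto. eapply rchS; eauto.
           left; exists x; split; auto; apply rch0.
        -- eapply tr_Rg1; eauto.
    + destruct (Inf21 _ H1) as [H|[w [H2 H3]]]; [auto|].
      left; exists w; split; auto; right; auto.
Qed.

Lemma codB x : FRg ed1 fl1 x \/ (cc /\ Inf ed1 x) <-> FRg ed2 fli x \/ (cc /\ Inf ed2 x).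
Proof.
  split.
  - intros [[w [H1 H2]]|[Hc H1]]; [|right; split; auto; apply Inf12; auto].
    destruct (R1_R2 _ _ H1) as [H3|[Ha H3]]; [|right; auto].
    destruct H2 as [[u [H4 H5]]|[Hc H4]].
    + left; exists u; split; auto; eapply Rch_trans; eauto; apply Ri_R2; auto.
    + right; split; auto; eapply Inf_rch; eauto; apply Inf_i2; auto.
  - intros [[w [H1 H2]]|[Hc H1]].
    + left. clear -H1 H2. induction H1.
      * exists x; split; [apply rch0|]. left; exists x; split; auto; apply rch0.
      * specialize (IHRch H2). destruct H as [H|H].
        -- destruct IHRch as [u [H3 H4]]. exists u; split; auto. eapply rchS; eauto.
           left; exists x; split; auto; apply rch0.
        -- eapply tr_FRg1; eauto.
    + destruct (Inf21 _ H1) as [H|[w [H2 H3]]]; [auto|].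
      left; exists w; split; auto; right; auto.
Qed.
End CD.

Lemma fun_eq1 {A} (r s : A -> Prop) : (forall a, r a <-> s a) -> r = s.
Proof.
  intros H; apply functional_extensionality; intro a; apply propositional_extensionality; auto.
Qed.

Lemma cod_dgen a c (Hac : forall X, a -> c X) : Codiagonal_ax Pd (dgen a c).
Proof.
  intros X Y f x.
  set (f2 := fun x' => rbind (copair (@rret (Y + X)%type) (fun x'' => rret (inr x''))) (f x')).
  change (dgen a c X Y (dgen a c X (Y + X)%type f) x = dgen a c X Y f2 x).
  assert (Hed : edf f2 = ed2 (edf f) (exf f)).
  { apply fun_eq2; intros u v; unfold edf, exf, ed2, f2; simpl; split.
    - intros [[s|x''] [H1 H2]]; simpl in H2; subst; auto.
      injection H2; intros; subst; auto.
    - intros [H|H]; [exists (inl (inr v)) | exists (inr v)]; simpl; auto. }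
  assert (Hex : exf f2 = ex2 (exf f)).
  { apply fun_eq2; intros u v; unfold exf, ex2, f2; simpl; split.
    - intros [[s|x''] [H1 H2]]; simpl in H2; subst; auto. discriminate.
    - intros H; exists (inl (inl v)); simpl; auto. }
  assert (Hfl : flf f2 = flf f).
  { apply fun_eq1; intros u; unfold flf, f2; simpl; split.
    - intros [H|[[s|x''] [H1 H2]]]; try simpl in H2; auto; contradiction.
    - auto. }
  unfold dgen at 3; rewrite Hed, Hex, Hfl.
  apply pair_ext; simpl.
  - intro y. apply codA.
  - apply codB; apply Hac.
Qed.

Lemma ext_all M d : dagger_ext M d.
Proof.
  intros X Y f g H x. assert (f = g) by (apply functional_extensionality; auto).
  subst; auto.
Qed.

Definition d0 : Dagger Pd := fun X Y f x => ((fun _ => False), False).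

Lemma case1 : exists (M : Monad) (d : Dagger M), dagger_ext M d /\
      ~ Fixpoint_ax M d /\ Naturality_ax M d /\ Codiagonal_ax M d /\ Uniformity_ax M d.
Proof.
  exists Pd, d0; split; [apply ext_all|split; [|split; [|split]]].
  - intros H. specialize (H unit unit (fun _ => rret (inl tt)) tt).
    apply (f_equal (fun p => fst p tt)) in H. simpl in H.
    rewrite <- H. exists (inl tt); simpl; auto.
  - intros X Y Z g f x. apply pair_ext; simpl.
    + intro z; split; [intros [y [[] _]] | intros []].
    + split; [intros [[]|[y [[] _]]] | intros []].
  - intros X Y f x; reflexivity.
  - intros X Y Z h g f H x; reflexivity.
Qed.

Lemma case2 : exists (M : Monad) (d : Dagger M), dagger_ext M d /\
      Fixpoint_ax M d /\ ~ Naturality_ax M d /\ Codiagonal_ax M d /\ Uniformity_ax M d.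
Proof.
  exists Pd, (dgen True (fun _ => True)); split; [apply ext_all|split; [|split; [|split]]].
  - apply fix_dgen.
  - intros H. specialize (H unit unit bool (fun _ => rret true) (fun _ => rret (inr tt)) tt).
    apply (f_equal (fun p => fst p false)) in H. simpl in H.
    assert (Hr : False -> False) by auto.
    match type of H with ?L = ?R => assert (HR : R) end.
    { right; split; [exact I|]. exists (fun _ => True); split; [exact I|].
      intros w _; exists tt; split; [|exact I].
      unfold edf; simpl. exists (inr tt); simpl; auto. }
    rewrite <- H in HR. destruct HR as [y [_ HR]]. discriminate.
  - apply cod_dgen; auto.
  - apply uni_dgen.
Qed.

Lemma case4 : exists (M : Monad) (d : Dagger M), dagger_ext M d /\
      Fixpoint_ax M d /\ Naturality_ax M d /\ Codiagonal_ax M d /\ ~ Uniformity_ax M d.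
Proof.
  exists Pd, (dgen False (fun X => forall u v : X, u = v));
    split; [apply ext_all|split; [|split; [|split]]].
  - apply fix_dgen.
  - apply nat_dgen.
  - apply cod_dgen; intros _ [].
  - intros H.
    specialize (H nat unit unit (fun _ => tt) (fun _ => rret (inr tt))
                  (fun n => rret (inr (S n)))).
    specialize (H ltac:(intros x; simpl; rewrite ret_rbind; reflexivity) 0). apply (f_equal snd) in H. simpl in H.
    match type of H with ?L = ?R => assert (HL : L) end.
    { right; split; [intros [] []; auto|]. exists (fun _ => True); split; [exact I|].
      intros w _; exists tt; split; [|exact I]. unfold edf; simpl; reflexivity. }
    rewrite H in HL. destruct HL as [[w [_ HL]]|[HL _]].
    + exact HL.
    + discriminate (HL 0 1).
Qed.

Definition VT (X : Type) : Type := {p : RT X | (exists x, fst p x) \/ snd p}.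

Lemma sig_eq {X} (p q : VT X) : proj1_sig p = proj1_sig q -> p = q.
Proof.
  destruct p as [p Hp], q as [q Hq]; simpl; intros ->. f_equal; apply proof_irrelevance.
Qed.

Definition vret {X} (x : X) : VT X :=
  exist _ (rret x) (or_introl (ex_intro (fun y => fst (rret x) y) x eq_refl)).

Lemma valid_bind {X Y} (f : X -> VT Y) (t : VT X) :
  (exists y, fst (rbind (fun x => proj1_sig (f x)) (proj1_sig t)) y) \/
  snd (rbind (fun x => proj1_sig (f x)) (proj1_sig t)).
Proof.
  destruct t as [[S b] Ht]; simpl in *. destruct Ht as [[x Hx]|Hb]; [|auto].
  destruct (f x) as [[S' b'] Hf] eqn:E. simpl in Hf. destruct Hf as [[y Hy]|Hb'].
  - left; exists y, x; rewrite E; simpl; auto.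
  - right; right; exists x; rewrite E; simpl; auto.
Qed.

Definition vbind {X Y} (f : X -> VT Y) (t : VT X) : VT Y :=
  exist _ (rbind (fun x => proj1_sig (f x)) (proj1_sig t)) (valid_bind f t).

Lemma vbind_ext X Y (f g : X -> VT Y) : (forall x, f x = g x) -> forall t, vbind f t = vbind g t.
Proof.
  intros H t; assert (f = g) by (apply functional_extensionality; auto); subst; auto.
Qed.
Lemma vbind_ret X (t : VT X) : vbind vret t = t.
Proof. apply sig_eq; simpl; apply rbind_ret. Qed.
Lemma vret_bind X Y (f : X -> VT Y) x : vbind f (vret x) = f x.
Proof. apply sig_eq; simpl; apply (ret_rbind X Y (fun x => proj1_sig (f x))). Qed.
Lemma vbind_bind X Y Z (f : X -> VT Y) (g : Y -> VT Z) t :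
  vbind g (vbind f t) = vbind (fun x => vbind g (f x)) t.
Proof. apply sig_eq; simpl; apply rbind_rbind. Qed.

Definition Pv : Monad := {|
  T := VT; ret := fun X => @vret X; bind := fun X Y => @vbind X Y;
  bind_ext := vbind_ext; bind_ret := vbind_ret; ret_bind := vret_bind;
  bind_bind := vbind_bind |}.

Definition rawc {X Y} (F : X -> RT (Y + X)) x : RT Y :=
  (fun y => Rg (edf F) (exf F) x y, FRg (edf F) (flf F) x \/ Cof (edf F) (exf F) x).

Lemma valid_c {X Y} (f : X -> VT (Y + X)) x :
  (exists y, fst (rawc (fun x => proj1_sig (f x)) x) y) \/ snd (rawc (fun x => proj1_sig (f x)) x).
Proof.
  set (F := fun x => proj1_sig (f x)). simpl.
  destruct (classic (exists y, Rg (edf F) (exf F) x y)) as [H|H]; [auto|].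
  destruct (classic (FRg (edf F) (flf F) x)) as [H'|H']; [auto|].
  right; right. exists x; split; [apply rch0|]. exists (Rch (edf F) x); split; [apply rch0|].
  intros v Hv; split.
  - intros y Hy; apply H; exists y, v; auto.
  - destruct (proj2_sig (f v)) as [[[y|v'] Hs]|Hs].
    + exfalso; apply H; exists y, v; auto.
    + exists v'; split; auto. eapply Rch_snoc; eauto.
    + exfalso; apply H'; exists v; auto.
Qed.

Definition dc : Dagger Pv :=
  fun X Y f x => exist _ (rawc (fun x => proj1_sig (f x)) x) (valid_c f x).

Lemma fix_dc : Fixpoint_ax Pv dc.
Proof.
  intros X Y f x. apply sig_eq. simpl.
  set (F := fun x => proj1_sig (f x)). change (proj1_sig (f x)) with (F x).
  apply pair_ext; simpl.
  - intro y. rewrite (Rg_unfold (edf F) (exf F) x y).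
    unfold exf, edf. split.
    + intros [[y'|x'] [H1 H2]]; simpl in H2.
      * subst; auto.
      * right; exists x'; auto.
    + intros [H|[x' [H1 H2]]].
      * exists (inl y); simpl; auto.
      * exists (inr x'); simpl; auto.
  - rewrite (FRg_unfold (edf F) (flf F) x), (Cof_unfold (edf F) (exf F) x).
    unfold flf, edf. split.
    + intros [H|[[y'|x'] [H1 H2]]]; try simpl in H2; [auto|contradiction|].
      destruct H2 as [H2|H2]; eauto 6.
    + intros [[H|[x' [H1 H2]]]|[x' [H1 H2]]]; auto.
      * right; exists (inr x'); simpl; auto.
      * right; exists (inr x'); simpl; auto.
Qed.

Lemma nat_dc : Naturality_ax Pv dc.
Proof.
  intros X Y Z g f x. apply sig_eq. simpl.
  set (F := fun x => proj1_sig (f x)). set (Gg := fun y => proj1_sig (g y)).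
  set (F' := fun x' => rbind (fun s => proj1_sig (copair
      (fun y => vbind (fun z => vret (inl z)) (g y)) (fun x'' => @vret (Z + X)%type (inr x'')) s))
      (F x')).
  change (rbind Gg (rawc F x) = rawc F' x).
  assert (Hed : edf F' = edf F).
  { apply fun_eq2; intros u v; unfold edf, F'; simpl; split.
    - intros [[y|x''] [H1 H2]]; simpl in H2.
      + destruct H2 as [z [_ H2]]; discriminate.
      + injection H2; intros; subst; auto.
    - intros H; exists (inr v); simpl; auto. }
  assert (Hex : forall u z, exf F' u z <-> exists y, exf F u y /\ fst (Gg y) z).
  { intros u z; unfold exf, F'; simpl; split.
    - intros [[y|x''] [H1 H2]]; simpl in H2.
      + destruct H2 as [z' [H2 H3]]; injection H3; intros; subst; eauto.
      + discriminate.
    - intros [y [H1 H2]]; exists (inl y); simpl; split; auto; exists z; auto. }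
  assert (Hfl : forall u, flf F' u <-> flf F u \/ exists y, exf F u y /\ snd (Gg y)).
  { intros u; unfold flf, exf, F'; simpl; split.
    - intros [H|[[y|x''] [H1 H2]]]; try simpl in H2; auto.
      + destruct H2 as [H2|[z [_ []]]]; eauto.
      + contradiction.
    - intros [H|[y [H1 H2]]]; auto. right; exists (inl y); simpl; auto. }
  unfold rawc; rewrite Hed. apply pair_ext; simpl.
  - intro z; split.
    + intros [y [[w [H1 H2]] H3]]. exists w; split; auto; apply Hex; eauto.
    + intros [w [H1 H2]]. apply Hex in H2; destruct H2 as [y [H2 H3]].
      exists y; split; auto; exists w; auto.
  - split.
    + intros [[[w [H1 H2]]|H]|[y [[w [H1 H2]] H3]]].
      * left; exists w; split; auto; apply Hfl; auto.
      * right. destruct H as [w [H1 [P [H2 H3]]]]. exists w; split; auto; exists P; split; auto.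
        intros v Hv; destruct (H3 v Hv) as [H4 H5]; split; auto.
        intros z Hz; apply Hex in Hz; destruct Hz as [y [Hz _]]; apply (H4 y); auto.
      * left; exists w; split; auto; apply Hfl; eauto.
    + intros [[w [H1 H2]]|H].
      * apply Hfl in H2; destruct H2 as [H2|[y [H2 H3]]].
        -- left; left; exists w; auto.
        -- right; exists y; split; auto; exists w; auto.
      * destruct (classic (exists y, Rg (edf F) (exf F) x y /\ snd (Gg y))) as [Hc|Hc]; [auto|].
        left; right. destruct H as [w [H1 [P [H2 H3]]]].
        exists w; split; auto. exists (fun v => P v /\ Rch (edf F) w v); split; [split; auto; apply rch0|].
        intros v [Hv1 Hv2]; destruct (H3 v Hv1) as [H4 [v' [H5 H6]]]; split.
        -- intros y Hy. destruct (proj2_sig (g y)) as [[z Hz]|Hs].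
           ++ apply (H4 z), Hex; exists y; auto.
           ++ apply Hc; exists y; split; auto. exists v; split; auto; eapply Rch_trans; eauto.
        -- exists v'; repeat split; auto; eapply Rch_snoc; eauto.
Qed.

Lemma uni_dc : Uniformity_ax Pv dc.
Proof.
  intros X Y Z h g f H x. apply sig_eq; simpl.
  set (F := fun x => proj1_sig (f x)). set (Gg := fun z => proj1_sig (g z)).
  assert (H' : forall x, Gg (h x) = rbind (fun s => rret (summap h s)) (F x)).
  { intros x'; unfold Gg; rewrite H; reflexivity. }
  destruct (uni_edges h Gg F H') as [Hed [Hex Hfl]].
  apply pair_ext; simpl.
  - intro y. apply (Rg_h h _ _ Hed _ _ Hex).
  - rewrite (FRg_h h _ _ Hed _ _ Hfl), (Cof_h h _ _ Hed _ _ Hex). tauto.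
Qed.

Definition fr (b : bool) : RT ((unit + bool) + bool) :=
  if b then (fun s => s = inr true \/ s = inl (inr false), False)
  else (fun s => s = inl (inl tt), False).

Lemma fr_valid b : (exists s, fst (fr b) s) \/ snd (fr b).
Proof. destruct b; simpl; left; eauto. Qed.

Definition fv (b : bool) : VT ((unit + bool) + bool) := exist _ (fr b) (fr_valid b).

Lemma case3 : exists (M : Monad) (d : Dagger M), dagger_ext M d /\
      Fixpoint_ax M d /\ Naturality_ax M d /\ ~ Codiagonal_ax M d /\ Uniformity_ax M d.
Proof.
  exists Pv, dc; split; [apply ext_all|split; [apply fix_dc|split; [apply nat_dc|split; [|apply uni_dc]]]].
  intros Hc. specialize (Hc bool unit fv true).
  apply (f_equal (fun p => snd (proj1_sig p))) in Hc. simpl in Hc.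
  match type of Hc with ?L = ?R => assert (HR : R) end.
  { right. exists true; split; [apply rch0|]. exists (fun v => v = true); split; auto.
    intros v ->; split.
    - intros y [[s|x''] [H1 H2]]; simpl in H1, H2; destruct H1 as [H1|H1]; congruence.
    - exists true; split; auto. exists (inr true); simpl; auto. }
  rewrite <- Hc in HR. clear Hc.
  set (F := fun x => proj1_sig (fv x)) in HR.
  assert (Hfl : forall w, ~ (FRg (edf F) (flf F) w \/ Cof (edf F) (exf F) w)).
  { intros w [[u [_ Hu]]|[u [_ [P [H1 H2]]]]].
    - destruct u; exact Hu.
    - destruct (H2 u H1) as [H3 _]. destruct u.
      + apply (H3 (inr false)); unfold exf, F; simpl; auto.
      + apply (H3 (inl tt)); unfold exf, F; simpl; auto. }
  assert (Hed : forall v v', Rg (edf F) (exf F) v (inr v') -> v' = false /\ v = true).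
  { intros v v' [u [H1 H2]]. destruct u; simpl in H2.
    - destruct H2 as [H2|H2]; [discriminate|]. injection H2; intros; subst. split; auto.
      destruct v; auto. exfalso. destruct (Rch_inv _ _ _ H1) as [H|[x' [H3 _]]];
        [discriminate|]. unfold edf in H3; simpl in H3; discriminate.
    - discriminate. }
  destruct HR as [[w [H1 H2]]|[w [H1 [P [H2 H3]]]]].
  - exact (Hfl w H2).
  - destruct (H3 w H2) as [_ [v' [H4 H5]]].
    destruct (Hed _ _ H4) as [-> _].
    destruct (H3 false H5) as [_ [v'' [H6 H7]]].
    destruct (Hed _ _ H6) as [_ H8]; discriminate.
Qed.

Theorem proposition4 :
  (exists (M : Monad) (d : Dagger M), dagger_ext M d /\
      ~ Fixpoint_ax M d /\ Naturality_ax M d /\ Codiagonal_ax M d /\ Uniformity_ax M d) /\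
  (exists (M : Monad) (d : Dagger M), dagger_ext M d /\
      Fixpoint_ax M d /\ ~ Naturality_ax M d /\ Codiagonal_ax M d /\ Uniformity_ax M d) /\
  (exists (M : Monad) (d : Dagger M), dagger_ext M d /\
      Fixpoint_ax M d /\ Naturality_ax M d /\ ~ Codiagonal_ax M d /\ Uniformity_ax M d) /\
  (exists (M : Monad) (d : Dagger M), dagger_ext M d /\
      Fixpoint_ax M d /\ Naturality_ax M d /\ Codiagonal_ax M d /\ ~ Uniformity_ax M d).
Proof.
  split; [exact case1|split; [exact case2|split; [exact case3|exact case4]]].
Qed.
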